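(* Let $q \in \mathbb{N}$. (a) For $\psi \in \mathcal{D}^q$ and $i=1,\dots, I$, it holds that $\phi_i \in \mathcal{C}^{\uparrow,q }$ and $\phi_i' (u) >0$ for all $u \in \mathbb{R}_+$. (b) For $\bar{\psi } \in \bar{\mathcal{D}}^q$, it holds that $\gamma_i \in \mathcal{C}^{\uparrow,q}$ for $i=0,1,\dots,I$, and $\gamma_0' (z)>0$ for all $z \in \mathbb{R}_+$. (c) The map $\Upsilon$ is a bijection from $\mathcal{D}^q$ to $\bar{\mathcal{D}}^q$.
   Context: Fix $I\in\mathbb{N}$. $\mathcal{C}=\{f\in C(\mathbb{R}_+,\mathbb{R}_+):f(0)=0,f\text{ non-decreasing}\}$, $\mathcal{C}^\uparrow=\{f\in\mathcal{C}:f\text{ strictly increasing},\lim_{u\to\infty}f(u)=\infty\}$. For $f:\mathbb{R}_+\to\mathbb{R}$, $f^{\mathbb{R}}$ extends $f$ by $0$ on $(-\infty,0)$ and $f^{\mathbb{R},\uparrow}$ extends $f$ by $u\mapsto u$ on $(-\infty,0)$; $\mathcal{C}^q=\{f\in\mathcal{C}:f^{\mathbb{R}}\in C^q(\mathbb{R},\mathbb{R})\}$, $\mathcal{C}^{\uparrow,q}=\{f\in\mathcal{C}^\uparrow:f^{\mathbb{R},\uparrow}\in C^q(\mathbb{R},\mathbb{R})\}$. For $\psi\in\mathcal{C}^I$, $\phi_i(u)=u-\sum_{j=1}^I2(i\wedge j)\psi_j(u)$. $\mathcal{D}=\{\psi\in\mathcal{C}^I:\phi_I\in\mathcal{C}^\uparrow,\sum_{i}i\sup_{u_1\ne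 u_2}\frac{\psi_i(u_1)-\psi_i(u_2)}{\phi_i(u_1)-\phi_i(u_2)}<\frac12\}$ (each $\phi_i\in\mathcal{C}^\uparrow$ then), $\bar{\mathcal{D}}=\{\bar\psi\in\mathcal{C}^I:\sum_ii\sup_{z_1\ne z_2}\frac{\bar\psi_i(z_1)-\bar\psi_i(z_2)}{z_1-z_2}<\frac12\}$, $\mathcal{D}^q=\mathcal{D}\cap(\mathcal{C}^q)^I$, $\bar{\mathcal{D}}^q=\bar{\mathcal{D}}\cap(\mathcal{C}^q)^I$. $\Upsilon(\psi)_i=\psi_i\circ\phi_i^{-1}$. For $\bar\psi\in\mathcal{C}^I$: $\gamma_I(z)=z$, $\gamma_i(z)=z+\sum_{j>i}2(j-i)\bar\psi_j(\gamma_j(z))$ for $i=I-1,\dots,0$. *)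

(* Defs.v *)
From Stdlib Require Import Reals List Arith ClassicalEpsilon.
From Coquelicot Require Import Coquelicot.
Open Scope R_scope.

(* Functions on R_+ are represented by functions R -> R; only their values on
   [0, +oo) matter. *)

Definition ext0 (f : R -> R) (u : R) : R := if Rle_dec 0 u then f u else 0.
Definition extup (f : R -> R) (u : R) : R := if Rle_dec 0 u then f u else u.

Definition Cq (q : nat) (g : R -> R) : Prop :=
  (forall k x, (k < q)%nat -> ex_derive (Derive_n g k) x) /\
  (forall x, continuous (Derive_n g q) x).

Definition inC (f : R -> R) : Prop :=
  (forall u, 0 <= u ->
     filterlim f (within (fun y => 0 <= y) (locally u)) (locally (f u))) /\
  (forall u, 0 <= u -> 0 <= f u) /\
  f 0 = 0 /\
  (forall u1 u2, 0 <= u1 -> u1 <= u2 -> f u1 <= f u2).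

Definition inCup (f : R -> R) : Prop :=
  inC f /\
  (forall u1 u2, 0 <= u1 -> u1 < u2 -> f u1 < f u2) /\
  (forall M, exists U, forall u, U <= u -> M <= f u).

Definition inCq (q : nat) (f : R -> R) : Prop := inC f /\ Cq q (ext0 f).
Definition inCupq (q : nat) (f : R -> R) : Prop := inCup f /\ Cq q (extup f).

Definition sum1 (n : nat) (F : nat -> R) : R := fold_right Rplus 0 (map F (seq 1 n)).

(* families psi = (psi_1,...,psi_I) are functions nat -> (R -> R); only the
   indices 1..I matter *)
Definition phi (I : nat) (psi : nat -> R -> R) (i : nat) (u : R) : R :=
  u - sum1 I (fun j => 2 * INR (Nat.min i j) * psi j u).

Definition supratio (f g : R -> R) : Rbar :=
  Lub_Rbar (fun r => exists u1 u2, 0 <= u1 /\ 0 <= u2 /\ u1 <> u2 /\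
                                   r = (f u1 - f u2) / (g u1 - g u2)).

Definition weighted_small (I : nat) (S : nat -> Rbar) : Prop :=
  (forall i, (1 <= i <= I)%nat -> is_finite (S i)) /\
  sum1 I (fun i => INR i * real (S i)) < 1 / 2.

Definition inCI (I : nat) (psi : nat -> R -> R) : Prop :=
  forall i, (1 <= i <= I)%nat -> inC (psi i).
Definition inCqI (q I : nat) (psi : nat -> R -> R) : Prop :=
  forall i, (1 <= i <= I)%nat -> inCq q (psi i).

Definition inD (I : nat) (psi : nat -> R -> R) : Prop :=
  inCI I psi /\ inCup (phi I psi I) /\
  weighted_small I (fun i => supratio (psi i) (phi I psi i)).

Definition inDbar (I : nat) (psib : nat -> R -> R) : Prop :=
  inCI I psib /\ weighted_small I (fun i => supratio (psib i) (fun z => z)).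

Definition inDq (q I : nat) (psi : nat -> R -> R) : Prop := inD I psi /\ inCqI q I psi.
Definition inDbarq (q I : nat) (psib : nat -> R -> R) : Prop :=
  inDbar I psib /\ inCqI q I psib.

(* inverse on R_+ of f : R_+ -> R_+ (meaningful when f is a bijection of R_+) *)
Definition finv (f : R -> R) (z : R) : R :=
  epsilon (inhabits 0) (fun u => 0 <= u /\ f u = z).

Definition Ups (I : nat) (psi : nat -> R -> R) (i : nat) (z : R) : R :=
  psi i (finv (phi I psi i) z).

(* gamma: G n k = gamma_{I-k} for k <= n *)
Fixpoint Gam (I : nat) (psib : nat -> R -> R) (n : nat) : nat -> R -> R :=
  match n with
  | O => fun _ z => z
  | S m => fun k z =>
      if Nat.leb k m then Gam I psib m k z
      else z + fold_right Rplus 0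
             (map (fun k' => 2 * INR (S m - k') * psib (I - k')%nat (Gam I psib m k' z))
                  (seq 0 (S m)))
  end.

(* gamma_I(z) = z,
   gamma_i(z) = z + sum_{j>i} 2(j-i) psib_j(gamma_j(z)),  0 <= i <= I *)
Definition gamma (I : nat) (psib : nat -> R -> R) (i : nat) (z : R) : R :=
  Gam I psib (I - i) (I - i) z.

Definition feq (I : nat) (f g : nat -> R -> R) : Prop :=
  forall i, (1 <= i <= I)%nat -> forall u, 0 <= u -> f i u = g i u.

(* Main.v *)
Require Import Defs.
From Stdlib Require Import Reals.
From Coquelicot Require Import Coquelicot.
From Stdlib Require Import Ranalysis5 Lra Lia List FunctionalExtensionality ClassicalEpsilon.
Open Scope R_scope.
Set Bullet Behavior "Strict Subproofs".

Fixpoint Ck (k : nat) (f : R -> R) : Prop :=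
  match k with
  | O => forall x, continuous f x
  | S k => (forall x, ex_derive f x) /\ Ck k (Derive f)
  end.

Lemma Derive_n_S' f n : Derive_n f (S n) = Derive_n (Derive f) n.
Proof.
  induction n; apply functional_extensionality; intro x; simpl; auto.
  simpl in IHn. now rewrite IHn.
Qed.

Lemma Ck_Cq q g : Ck q g <-> Cq q g.
Proof.
  revert g; induction q; intro g; unfold Cq; simpl; split.
  - intros H; split; [intros; lia| exact H].
  - intros [_ H]; exact H.
  - intros [H1 H2]. apply IHq in H2. destruct H2 as [H3 H4]. split.
    + intros [|k] x Hk; simpl; auto.
      change (Derive (Derive_n g k)) with (Derive_n g (S k)).
      rewrite Derive_n_S'. apply H3; lia.
    + intro x. change (Derive (Derive_n g q)) with (Derive_n g (S q)).
      rewrite Derive_n_S'. apply H4.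
  - intros [H1 H2]. split.
    + intro x; apply (H1 0%nat); lia.
    + apply IHq. split.
      * intros k x Hk. rewrite <- Derive_n_S'. apply H1; lia.
      * intro x. rewrite <- Derive_n_S'. apply H2.
Qed.

Lemma Ck_ext k f g : (forall x, f x = g x) -> Ck k f -> Ck k g.
Proof. intros H; replace g with f; auto. now apply functional_extensionality. Qed.

Lemma Ck_cont k f : Ck k f -> forall x, continuous f x.
Proof.
  destruct k; simpl; auto. intros [H _] x. exact (@ex_derive_continuous R_AbsRing R_NormedModule f x (H x)).
Qed.

Lemma Ck_down k f : Ck (S k) f -> Ck k f.
Proof.
  revert f; induction k; intros f H.
  - simpl. now apply Ck_cont with 1%nat.
  - destruct H as [H1 H2]. split; auto.
Qed.

Lemma Ck_const k c : Ck k (fun _ => c).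
Proof.
  revert c; induction k; simpl; intro c.
  - intros; apply continuous_const.
  - split. intros; apply ex_derive_const.
    apply Ck_ext with (fun _ => 0); auto. intros; now rewrite Derive_const.
Qed.

Lemma Ck_id k : Ck k (fun x => x).
Proof.
  destruct k; simpl.
  - intros; apply continuous_id.
  - split. intros; apply ex_derive_id.
    apply Ck_ext with (fun _ => 1). intros; now rewrite Derive_id. apply Ck_const.
Qed.

Lemma Ck_plus k f g : Ck k f -> Ck k g -> Ck k (fun x => f x + g x).
Proof.
  revert f g; induction k; simpl; intros f g Hf Hg.
  - intro x; apply (continuous_plus f g); auto.
  - destruct Hf as [Hf1 Hf2]; destruct Hg as [Hg1 Hg2]. split.
    + intro x; apply (ex_derive_plus f g); auto.
    + apply Ck_ext with (fun x => Derive f x + Derive g x).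
      intro x; rewrite Derive_plus; auto. now apply IHk.
Qed.

Lemma Ck_scal k c f : Ck k f -> Ck k (fun x => c * f x).
Proof.
  revert f; induction k; simpl; intros f Hf.
  - intro x; apply (continuous_mult (fun _ => c) f); auto. apply continuous_const.
  - destruct Hf as [Hf1 Hf2]. split.
    + intro x; apply ex_derive_scal; auto.
    + apply Ck_ext with (fun x => c * Derive f x).
      intro x; rewrite Derive_scal; auto. now apply IHk.
Qed.

Lemma Ck_mult k f g : Ck k f -> Ck k g -> Ck k (fun x => f x * g x).
Proof.
  revert f g; induction k; simpl; intros f g Hf Hg.
  - intro x; apply (continuous_mult f g); auto.
  - pose proof (Ck_down _ _ Hf) as Hf'. pose proof (Ck_down _ _ Hg) as Hg'.
    destruct Hf as [Hf1 Hf2]; destruct Hg as [Hg1 Hg2]. split.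
    + intro x; apply ex_derive_mult; auto.
    + apply Ck_ext with (fun x => Derive f x * g x + f x * Derive g x).
      intro x; rewrite Derive_mult; auto. apply Ck_plus; apply IHk; auto.
Qed.

Lemma Ck_comp k f g : Ck k f -> Ck k g -> Ck k (fun x => f (g x)).
Proof.
  revert f g; induction k; simpl; intros f g Hf Hg.
  - intro x; apply (continuous_comp g f); auto.
  - pose proof (Ck_down _ _ Hg) as Hg'.
    destruct Hf as [Hf1 Hf2]; destruct Hg as [Hg1 Hg2]. split.
    + intro x; apply ex_derive_comp; auto.
    + apply Ck_ext with (fun x => Derive g x * Derive f (g x)).
      intro x; symmetry; apply Derive_comp; auto. apply Ck_mult; auto.
Qed.

Lemma Ck_inv k h : Ck k h -> (forall x, h x <> 0) -> Ck k (fun x => / h x).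
Proof.
  revert h; induction k; simpl; intros h Hh Hnz.
  - intro x. apply (continuous_comp h (fun y => / y)); auto.
    apply (@ex_derive_continuous R_AbsRing R_NormedModule).
    apply (ex_derive_inv (fun y => y)); auto. apply ex_derive_id.
  - pose proof (Ck_down _ _ Hh) as Hh'. destruct Hh as [H1 H2]. split.
    + intro x; apply ex_derive_inv; auto.
    + apply Ck_ext with (fun x => (-1 * Derive h x) * ((/ h x) * (/ h x))).
      intro x; rewrite Derive_inv; auto. field. auto.
      apply Ck_mult. apply Ck_scal; auto. apply Ck_mult; apply IHk; auto.
Qed.

Lemma incr_inv_cont g h : (forall x y, x < y -> g x < g y) ->
  (forall x, g (h x) = x) -> (forall x, h (g x) = x) -> forall z, continuous h z.
Proof.
  intros Hg Hgh Hhg z. apply continuity_pt_filterlim. apply continuity_pt_locally.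
  intros eps.
  assert (Hhi : forall x y, x < y -> h x < h y).
  { intros x y Hxy. destruct (Rlt_le_dec (h x) (h y)) as [|H]; auto.
    destruct (Rle_lt_or_eq_dec _ _ H) as [H'|H'].
    - apply Hg in H'. rewrite !Hgh in H'. lra.
    - rewrite <- (Hgh x), <- (Hgh y), H' in Hxy. lra. }
  set (a := h z - eps). set (b := h z + eps).
  assert (Ha : g a < z). { rewrite <- (Hgh z) at 1. apply Hg. unfold a; destruct eps; simpl; lra. }
  assert (Hb : z < g b). { rewrite <- (Hgh z) at 1. apply Hg. unfold b; destruct eps; simpl; lra. }
  assert (Hd : 0 < Rmin (z - g a) (g b - z)) by (apply Rmin_pos; lra).
  exists (mkposreal _ Hd). intros y Hy. change (Rabs (y - z) < Rmin (z - g a) (g b - z)) in Hy.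
  apply Rabs_def2 in Hy. destruct Hy as [Hy1 Hy2].
  pose proof (Rmin_l (z - g a) (g b - z)). pose proof (Rmin_r (z - g a) (g b - z)).
  assert (h y < b). { rewrite <- (Hhg b). apply Hhi. lra. }
  assert (a < h y). { rewrite <- (Hhg a). apply Hhi. lra. }
  apply Rabs_def1; unfold a, b in *; lra.
Qed.

Lemma inv_derive g h : (forall x, ex_derive g x) -> (forall x y, x < y -> g x < g y) ->
  (forall x, 0 < Derive g x) ->
  (forall x, g (h x) = x) -> (forall x, h (g x) = x) ->
  forall z, is_derive h z (/ Derive g (h z)).
Proof.
  intros Hd Hg Hpos Hgh Hhg z.
  assert (Hhi : forall x y, x < y -> h x < h y).
  { intros x y Hxy. destruct (Rlt_le_dec (h x) (h y)) as [|H]; auto.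
    destruct (Rle_lt_or_eq_dec _ _ H) as [H'|H'].
    - apply Hg in H'. rewrite !Hgh in H'. lra.
    - rewrite <- (Hgh x), <- (Hgh y), H' in Hxy. lra. }
  assert (Prf : forall a, h (z-1) <= a <= h (z+1) -> derivable_pt g a).
  { intros a _. apply ex_derive_Reals_0; auto. }
  assert (Hc : continuity_pt h z).
  { apply continuity_pt_filterlim. apply (incr_inv_cont g h); auto. }
  assert (Hincr : h (z-1) <= h z <= h (z+1)).
  { split; left; apply Hhi; lra. }
  pose proof (derivable_pt_lim_recip_interv g h (z-1) (z+1) z Prf Hc) as L.
  assert (E : derive_pt g (h z) (Prf (h z) Hincr) = Derive g (h z)).
  { apply derive_pt_eq_0. apply is_derive_Reals. apply Derive_correct; auto. }
  apply is_derive_Reals.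
  replace (/ Derive g (h z)) with (1 / derive_pt g (h z) (Prf (h z) Hincr)).
  apply L; try lra. intros x _. unfold comp, id. apply Hgh.
  rewrite E. specialize (Hpos (h z)). lra.
  rewrite E. unfold Rdiv. ring.
Qed.

Lemma Ck_invfun k g h : Ck (S k) g -> (forall x y, x < y -> g x < g y) ->
  (forall x, 0 < Derive g x) ->
  (forall x, g (h x) = x) -> (forall x, h (g x) = x) -> Ck (S k) h.
Proof.
  intros Hg Hi Hpos Hgh Hhg. induction k.
  - destruct Hg as [Hg1 Hg2]. split.
    + intro z. eexists. apply (inv_derive g h); auto.
    + apply Ck_ext with (fun z => / Derive g (h z)).
      intro z. symmetry. apply is_derive_unique, (inv_derive g h); auto.
      apply Ck_inv. apply Ck_comp; auto. simpl. apply (incr_inv_cont g h); auto.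
      intro x; specialize (Hpos (h x)); lra.
  - pose proof (IHk (Ck_down _ _ Hg)) as Hh. destruct Hg as [Hg1 Hg2]. split.
    + intro z. eexists. apply (inv_derive g h); auto.
    + apply Ck_ext with (fun z => / Derive g (h z)).
      intro z. symmetry. apply is_derive_unique, (inv_derive g h); auto.
      apply Ck_inv. apply Ck_comp; auto.
      intro x; specialize (Hpos (h x)); lra.
Qed.

Definition sumL (l : list nat) (F : nat -> R) : R := fold_right Rplus 0 (map F l).

Lemma sum1_sumL I F : sum1 I F = sumL (seq 1 I) F.
Proof. reflexivity. Qed.

Lemma sumL_ext l F G : (forall j, In j l -> F j = G j) -> sumL l F = sumL l G.
Proof.
  induction l; simpl; intros H; auto. unfold sumL in *; simpl. rewrite H, IHl; auto.
Qed.

Lemma sumL_plus l F G : sumL l (fun j => F j + G j) = sumL l F + sumL l G.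
Proof. induction l; unfold sumL in *; simpl; [lra|]. rewrite IHl; lra. Qed.

Lemma sumL_scal l c F : sumL l (fun j => c * F j) = c * sumL l F.
Proof. induction l; unfold sumL in *; simpl; [lra|]. rewrite IHl; lra. Qed.

Lemma sumL_minus l F G : sumL l (fun j => F j - G j) = sumL l F - sumL l G.
Proof.
  replace (sumL l (fun j => F j - G j)) with (sumL l (fun j => F j + (-1) * G j)).
  rewrite sumL_plus, sumL_scal; lra. apply sumL_ext; intros; lra.
Qed.

Lemma sumL_le l F G : (forall j, In j l -> F j <= G j) -> sumL l F <= sumL l G.
Proof.
  induction l; unfold sumL in *; simpl; intros H; [lra|].
  pose proof (H a (or_introl eq_refl)). pose proof (IHl (fun j Hj => H j (or_intror Hj))). lra.
Qed.

Lemma sumL_zero l F : (forall j, In j l -> F j = 0) -> sumL l F = 0.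
Proof.
  induction l; unfold sumL in *; simpl; intros H; [lra|].
  rewrite H, IHl; auto. lra.
Qed.

Lemma sumL_nonneg l F : (forall j, In j l -> 0 <= F j) -> 0 <= sumL l F.
Proof. intros H. rewrite <- (sumL_zero l (fun _ => 0)); auto. apply sumL_le; auto. Qed.

Lemma Ck_sumL k l F : (forall j, In j l -> Ck k (F j)) -> Ck k (fun x => sumL l (fun j => F j x)).
Proof.
  induction l; unfold sumL in *; simpl; intros H.
  - apply Ck_const.
  - apply Ck_plus; auto.
Qed.

Lemma sumL_app l1 l2 F : sumL (l1 ++ l2) F = sumL l1 F + sumL l2 F.
Proof. induction l1; unfold sumL in *; simpl; [lra|]. rewrite IHl1; lra. Qed.

Lemma sumL_single I c a : (1 <= c <= I)%nat ->
  sumL (seq 1 I) (fun j => if Nat.eqb j c then a else 0) = a.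
Proof.
  induction I; intros Hc; [lia|].
  rewrite seq_S, sumL_app. unfold sumL at 2; simpl.
  destruct (Nat.eq_dec c (S I)) as [->|Hne].
  - rewrite Nat.eqb_refl. rewrite sumL_zero. lra.
    intros j Hj; apply in_seq in Hj. destruct (Nat.eqb_spec j (S I)); [lia|auto].
  - destruct c as [|c]; [lia|]. replace (Nat.eqb I c) with false by (symmetry; apply Nat.eqb_neq; lia).
    assert (1 <= S c <= I)%nat by lia.
    rewrite IHI; auto. lra.
Qed.

Lemma reindex I k F : (k <= I)%nat ->
  sumL (seq 0 k) (fun k' => F (I - k')%nat) =
  sumL (seq 1 I) (fun j => if Nat.ltb (I - k) j then F j else 0).
Proof.
  induction k; intros Hk.
  - unfold sumL at 1; simpl. symmetry; apply sumL_zero. intros j Hj; apply in_seq in Hj.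
    destruct (Nat.ltb_spec (I - 0) j); [lia|auto].
  - rewrite seq_S, sumL_app, IHk by lia. unfold sumL at 2; simpl.
    rewrite <- (sumL_single I (I - k) (F (I - k)%nat)) by lia.
    rewrite Rplus_0_r, <- sumL_plus. apply sumL_ext. intros j Hj; apply in_seq in Hj.
    destruct (Nat.ltb_spec (I - S k) j), (Nat.ltb_spec (I - k) j), (Nat.eqb_spec j (I - k)); subst; try lia; lra.
Qed.

Lemma finv_spec f z : (exists u, 0 <= u /\ f u = z) -> 0 <= finv f z /\ f (finv f z) = z.
Proof. intros H. unfold finv. apply (epsilon_spec (inhabits 0) (fun u => 0 <= u /\ f u = z)). exact H. Qed.

Definition sincr (f : R -> R) := forall x y, 0 <= x -> x < y -> f x < f y.

Lemma sincr_inj f x y : sincr f -> 0 <= x -> 0 <= y -> f x = f y -> x = y.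
Proof.
  intros Hf Hx Hy E. destruct (Rtotal_order x y) as [H|[H|H]]; auto.
  apply Hf in H; auto; lra. apply Hf in H; auto; lra.
Qed.

Lemma sincr_le f x y : sincr f -> 0 <= x -> 0 <= y -> f x <= f y -> x <= y.
Proof.
  intros Hf Hx Hy E. destruct (Rle_lt_dec x y) as [H|H]; auto.
  apply Hf in H; auto; lra.
Qed.

Lemma finv_f f u : sincr f -> 0 <= u -> finv f (f u) = u.
Proof.
  intros Hf Hu. destruct (finv_spec f (f u)) as [H1 H2]. eauto.
  apply (sincr_inj f); auto.
Qed.

Lemma ivt_R f a b z : (forall x, continuous f x) -> a <= b -> f a <= z <= f b ->
  exists u, a <= u <= b /\ f u = z.
Proof.
  intros Hc Hab Hz.
  destruct (IVT_cor (fun x => f x - z) a b) as [u [Hu1 Hu2]]; auto.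
  - intro x. apply continuity_pt_filterlim.
    apply (continuous_plus f (fun _ => - z)); auto. apply continuous_const.
  - nra.
  - exists u; split; auto; lra.
Qed.

Lemma inC_of_glob f g : (forall u, 0 <= u -> f u = g u) -> (forall u, continuous g u) ->
  (forall u, 0 <= u -> 0 <= f u) -> f 0 = 0 ->
  (forall u1 u2, 0 <= u1 -> u1 <= u2 -> f u1 <= f u2) -> inC f.
Proof.
  intros Hfg Hc H1 H2 H3. repeat split; auto.
  intros u Hu P HP. rewrite Hfg in HP by auto. specialize (Hc u P HP).
  unfold filtermap in *. unfold within.
  apply (filter_imp (fun y => P (g y))); auto. intros y Hy Hy0. rewrite Hfg; auto.
Qed.

Lemma deriv_ge f x c : ex_derive f x -> (forall y, x < y -> c * (y - x) <= f y - f x) ->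
  c <= Derive f x.
Proof.
  intros Hd Hy. destruct (Rle_lt_dec c (Derive f x)) as [|Hlt]; auto. exfalso.
  pose proof (proj1 (is_derive_Reals f x (Derive f x)) (Derive_correct f x Hd)) as L.
  assert (He : 0 < (c - Derive f x) / 2) by lra.
  destruct (L _ He) as [delta Hdel].
  assert (Hh : 0 < delta / 2) by (destruct delta; simpl; lra).
  assert (Hh0 : delta / 2 <> 0) by lra.
  assert (Hh1 : Rabs (delta / 2) < delta) by (rewrite Rabs_pos_eq; destruct delta; simpl in *; lra).
  specialize (Hdel _ Hh0 Hh1). apply Rabs_def2 in Hdel. destruct Hdel as [Hd1 Hd2].
  specialize (Hy (x + delta / 2)). assert (x < x + delta/2) by lra. specialize (Hy H).
  replace (x + delta / 2 - x) with (delta / 2) in Hy by ring.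
  set (N := f (x + delta / 2) - f x) in *. set (h := delta / 2) in *.
  assert (N / h * h = N) by (field; lra).
  assert (c <= N / h). { apply (Rmult_le_reg_r h); auto. lra. }
  lra.
Qed.

Lemma ratio_le f g x y : is_finite (supratio f g) -> 0 <= x -> 0 <= y -> x <> y ->
  (f x - f y) / (g x - g y) <= real (supratio f g).
Proof.
  intros Hfin Hx Hy Hxy. unfold supratio in *.
  destruct (Lub_Rbar_correct (fun r => exists u1 u2, 0 <= u1 /\ 0 <= u2 /\ u1 <> u2 /\
                                   r = (f u1 - f u2) / (g u1 - g u2))) as [Hub _].
  specialize (Hub ((f x - f y) / (g x - g y))).
  rewrite <- Hfin in Hub. simpl in Hub. apply Hub. exists x, y. auto.
Qed.

Lemma ratio_mul f g x y : is_finite (supratio f g) -> 0 <= x -> x < y -> g x < g y ->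
  f y - f x <= real (supratio f g) * (g y - g x).
Proof.
  intros Hfin Hx Hxy Hg. pose proof (ratio_le f g y x Hfin) as H.
  assert (E : (f y - f x) / (g y - g x) * (g y - g x) = f y - f x) by (field; lra).
  assert (Hy0 : 0 <= y) by lra. assert (Hyx : y <> x) by lra. specialize (H Hy0 Hx Hyx).
  rewrite <- E. apply Rmult_le_compat_r; lra.
Qed.

Lemma ext0_pos f u : 0 <= u -> ext0 f u = f u.
Proof. intros; unfold ext0; destruct (Rle_dec 0 u); auto; lra. Qed.
Lemma ext0_neg f u : u < 0 -> ext0 f u = 0.
Proof. intros; unfold ext0; destruct (Rle_dec 0 u); auto; lra. Qed.
Lemma extup_pos f u : 0 <= u -> extup f u = f u.
Proof. intros; unfold extup; destruct (Rle_dec 0 u); auto; lra. Qed.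
Lemma extup_neg f u : u < 0 -> extup f u = u.
Proof. intros; unfold extup; destruct (Rle_dec 0 u); auto; lra. Qed.

Lemma coef_eq I i j : (j <= I)%nat -> INR (Nat.min I j) - INR (Nat.min i j) = INR (j - i).
Proof.
  intros Hj. rewrite Nat.min_r by auto.
  destruct (Compare_dec.le_lt_dec i j).
  - rewrite Nat.min_l by auto. rewrite minus_INR by auto. ring.
  - rewrite Nat.min_r by lia. replace (j - i)%nat with 0%nat by lia. simpl; ring.
Qed.

Lemma inC_ext0_mono f : inC f -> forall x y, x <= y -> ext0 f x <= ext0 f y.
Proof.
  intros [_ [Hn [H0 Hm]]] x y Hxy. unfold ext0.
  destruct (Rle_dec 0 x), (Rle_dec 0 y); try lra; auto.
Qed.

Lemma in_seq1 I j : In j (seq 1 I) -> (1 <= j <= I)%nat.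
Proof. intros H; apply in_seq in H; lia. Qed.

Lemma phi_diff I psi i u : (i <= I)%nat ->
  phi I psi i u = phi I psi I u + sum1 I (fun j => 2 * INR (j - i) * psi j u).
Proof.
  intros Hi. unfold phi. rewrite !sum1_sumL.
  assert (sumL (seq 1 I) (fun j => 2 * INR (Nat.min i j) * psi j u) =
          sumL (seq 1 I) (fun j => 2 * INR (Nat.min I j) * psi j u) -
          sumL (seq 1 I) (fun j => 2 * INR (j - i) * psi j u)).
  { rewrite <- sumL_minus. apply sumL_ext. intros j Hj. apply in_seq1 in Hj.
    rewrite <- coef_eq with (I := I) by lia. ring. }
  rewrite H. ring.
Qed.

Lemma phi_0 I psi : inCI I psi -> forall i, phi I psi i 0 = 0.
Proof.
  intros HC i. unfold phi. rewrite sum1_sumL, sumL_zero. ring.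
  intros j Hj. apply in_seq1 in Hj. destruct (HC j Hj) as [_ [_ [H0 _]]]. rewrite H0; ring.
Qed.

Lemma phi_ge_I I psi i u : inCI I psi -> (i <= I)%nat -> 0 <= u ->
  phi I psi I u <= phi I psi i u.
Proof.
  intros HC Hi Hu. rewrite (phi_diff I psi i u Hi).
  assert (0 <= sum1 I (fun j => 2 * INR (j - i) * psi j u)); [|lra].
  rewrite sum1_sumL. apply sumL_nonneg. intros j Hj. apply in_seq1 in Hj.
  destruct (HC j Hj) as [_ [Hn _]]. specialize (Hn u Hu). pose proof (pos_INR (j - i)). nra.
Qed.

Lemma phi_sincr I psi i : inCI I psi -> inCup (phi I psi I) -> (i <= I)%nat -> sincr (phi I psi i).
Proof.
  intros HC [_ [Hs _]] Hi x y Hx Hxy. rewrite !(phi_diff I psi i) by auto.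
  specialize (Hs x y Hx Hxy).
  assert (sum1 I (fun j => 2 * INR (j - i) * psi j x) <= sum1 I (fun j => 2 * INR (j - i) * psi j y)); [|lra].
  rewrite !sum1_sumL. apply sumL_le. intros j Hj. apply in_seq1 in Hj.
  destruct (HC j Hj) as [_ [_ [_ Hm]]]. specialize (Hm x y Hx (Rlt_le _ _ Hxy)).
  pose proof (pos_INR (j - i)). nra.
Qed.

Lemma phi_nonneg I psi i u : inCI I psi -> inCup (phi I psi I) -> (i <= I)%nat -> 0 <= u ->
  0 <= phi I psi i u.
Proof.
  intros HC Hup Hi Hu. destruct (Req_dec u 0) as [->|Hne].
  rewrite phi_0; auto; lra.
  rewrite <- (phi_0 I psi HC i). left. apply (phi_sincr I psi i); auto; lra.
Qed.

Lemma extphi_eq I psi i u : inCI I psi ->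
  extup (phi I psi i) u = u - sum1 I (fun j => 2 * INR (Nat.min i j) * ext0 (psi j) u).
Proof.
  intros HC. destruct (Rle_dec 0 u).
  - rewrite extup_pos by auto. unfold phi. f_equal. rewrite !sum1_sumL. apply sumL_ext.
    intros; rewrite ext0_pos; auto.
  - rewrite extup_neg by lra. rewrite sum1_sumL, sumL_zero. ring.
    intros; rewrite ext0_neg by lra. ring.
Qed.

Definition Lc I psi j := real (supratio (psi j) (phi I psi j)).

Lemma Lc_nonneg I psi j : inD I psi -> (1 <= j <= I)%nat -> 0 <= Lc I psi j.
Proof.
  intros [HC [Hup [Hfin _]]] Hj. unfold Lc.
  eapply Rle_trans; [| apply (ratio_le _ _ 1 0); auto; lra].
  destruct (HC j Hj) as [_ [_ [_ Hm]]]. specialize (Hm 0 1 (Rle_refl 0) Rle_0_1).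
  assert (phi I psi j 0 < phi I psi j 1) by (apply phi_sincr; auto; lia || lra).
  apply Rmult_le_pos; [lra|]. left; apply Rinv_0_lt_compat; lra.
Qed.

Lemma K2 I psi i x y : inCI I psi -> x <= y ->
  extup (phi I psi i) y - extup (phi I psi i) x <= y - x.
Proof.
  intros HC Hxy. rewrite !extphi_eq by auto.
  assert (sum1 I (fun j => 2 * INR (Nat.min i j) * ext0 (psi j) x) <=
          sum1 I (fun j => 2 * INR (Nat.min i j) * ext0 (psi j) y)); [|lra].
  rewrite !sum1_sumL. apply sumL_le. intros j Hj. apply in_seq1 in Hj.
  pose proof (inC_ext0_mono _ (HC j Hj) x y Hxy). pose proof (pos_INR (Nat.min i j)). nra.
Qed.

Lemma K3 I psi j x y : inD I psi -> (1 <= j <= I)%nat -> x < y ->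
  ext0 (psi j) y - ext0 (psi j) x <= Lc I psi j * (extup (phi I psi j) y - extup (phi I psi j) x).
Proof.
  intros HD Hj Hxy. pose proof (Lc_nonneg I psi j HD Hj) as HL.
  destruct HD as [HC [Hup [Hfin _]]].
  assert (Hs : sincr (phi I psi j)) by (apply phi_sincr; auto; lia).
  destruct (Rle_dec 0 x) as [Hx|Hx].
  - assert (0 <= y) by lra. rewrite (ext0_pos _ x), (ext0_pos _ y), (extup_pos _ x), (extup_pos _ y) by lra. unfold Lc. apply ratio_mul; auto.
  - rewrite (ext0_neg _ x), (extup_neg _ x) by lra. destruct (Rle_dec 0 y) as [Hy|Hy].
    + rewrite ext0_pos, extup_pos by lra.
      destruct (Req_dec y 0) as [->|Hy0].
      * destruct (HC j Hj) as [_ [_ [H0 _]]]. rewrite H0, phi_0 by auto. nra.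
      * pose proof (ratio_mul (psi j) (phi I psi j) 0 y (Hfin j Hj) (Rle_refl 0)) as R.
        assert (0 < y) by lra. specialize (R H).
        destruct (HC j Hj) as [_ [_ [H0 _]]]. rewrite H0, phi_0 in R by auto.
        assert (0 < phi I psi j y) by (rewrite <- (phi_0 I psi HC j); apply Hs; lra).
        specialize (R H1). unfold Lc in *. assert (x < 0) by lra. nra.
    + rewrite ext0_neg, extup_neg by lra. nra.
Qed.

Definition cst I psi := 1 - 2 * sum1 I (fun j => INR j * Lc I psi j).

Lemma K4 I psi i x y : inD I psi -> x < y ->
  cst I psi * (y - x) <= extup (phi I psi i) y - extup (phi I psi i) x.
Proof.
  intros HD Hxy. pose proof HD as [HC _]. rewrite !extphi_eq by auto. unfold cst.
  assert (sum1 I (fun j => 2 * INR (Nat.min i j) * ext0 (psi j) y) -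
          sum1 I (fun j => 2 * INR (Nat.min i j) * ext0 (psi j) x) <=
          2 * sum1 I (fun j => INR j * Lc I psi j) * (y - x)); [|nra].
  rewrite !sum1_sumL, <- sumL_minus.
  replace (2 * sumL (seq 1 I) (fun j => INR j * Lc I psi j) * (y - x)) with (sumL (seq 1 I) (fun j => 2 * (y - x) * (INR j * Lc I psi j))) by (rewrite sumL_scal; ring).
  apply sumL_le. intros j Hj. apply in_seq1 in Hj.
  pose proof (inC_ext0_mono _ (HC j Hj) x y (Rlt_le _ _ Hxy)).
  pose proof (K3 I psi j x y HD Hj Hxy). pose proof (K2 I psi j x y HC (Rlt_le _ _ Hxy)).
  pose proof (Lc_nonneg I psi j HD Hj).
  assert (INR (Nat.min i j) <= INR j) by (apply le_INR; lia).
  pose proof (pos_INR (Nat.min i j)).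
  assert (ext0 (psi j) y - ext0 (psi j) x <= Lc I psi j * (y - x)) by nra.
  nra.
Qed.

Lemma cst_pos I psi : inD I psi -> 0 < cst I psi.
Proof. intros [_ [_ [_ H]]]. unfold cst, Lc. lra. Qed.

Lemma Ck_S_ex k f : Ck (S k) f -> forall x, ex_derive f x.
Proof. intros [H _]; exact H. Qed.

Lemma Ck_extphi q I psi i : inCqI q I psi -> inCI I psi -> Ck q (extup (phi I psi i)).
Proof.
  intros Hq HC. apply Ck_ext with (fun u => u + (-1) * sumL (seq 1 I) (fun j => 2 * INR (Nat.min i j) * ext0 (psi j) u)).
  { intro u. rewrite extphi_eq by auto. rewrite sum1_sumL. ring. }
  apply Ck_plus. apply Ck_id. apply Ck_scal.
  apply (Ck_sumL q (seq 1 I) (fun j u => 2 * INR (Nat.min i j) * ext0 (psi j) u)).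
  intros j Hj. apply in_seq1 in Hj. apply Ck_scal. apply Ck_Cq. apply (Hq j Hj).
Qed.

Lemma partA_full q I psi i : (1 <= q)%nat -> inDq q I psi -> (i <= I)%nat ->
  Ck q (extup (phi I psi i)) /\ inCupq q (phi I psi i) /\
  (forall u, 0 < Derive (extup (phi I psi i)) u).
Proof.
  intros Hq1 [HD Hq] Hi. pose proof HD as [HC [Hup Hw]].
  assert (Hck : Ck q (extup (phi I psi i))) by (apply Ck_extphi; auto).
  assert (Hder : forall u, 0 < Derive (extup (phi I psi i)) u).
  { intro u. apply Rlt_le_trans with (cst I psi). apply cst_pos; auto.
    apply deriv_ge. destruct q; [lia|]. apply (Ck_S_ex q); auto.
    intros y Hy. apply K4; auto. }
  split; auto. split; auto. split; [|apply Ck_Cq; auto].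
  assert (Hs : sincr (phi I psi i)) by (apply phi_sincr; auto).
  split; [|split].
  - apply inC_of_glob with (extup (phi I psi i)).
    + intros; symmetry; apply extup_pos; auto.
    + apply Ck_cont with q; auto.
    + intros; apply phi_nonneg; auto.
    + apply phi_0; auto.
    + intros u1 u2 H1 H2. destruct (Req_dec u1 u2) as [->|]; [lra|]. left; apply Hs; lra.
  - exact Hs.
  - intro M. destruct Hup as [_ [_ Hub]]. destruct (Hub M) as [U HU]. exists (Rmax U 0).
    intros u Hu. pose proof (Rmax_l U 0). pose proof (Rmax_r U 0).
    apply Rle_trans with (phi I psi I u). apply HU; lra. apply phi_ge_I; auto. lra.
Qed.

Lemma Gam_stable I psib n k z : (k <= n)%nat -> Gam I psib n k z = Gam I psib k k z.
Proof.
  revert k; induction n; intros k Hk.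
  - replace k with 0%nat by lia. reflexivity.
  - destruct (Nat.eq_dec k (S n)) as [->|Hne]; [reflexivity|].
    simpl. replace (Nat.leb k n) with true by (symmetry; apply Nat.leb_le; lia).
    apply IHn; lia.
Qed.

Lemma gamma_closed I psib i z : (i <= I)%nat ->
  gamma I psib i z = z + sum1 I (fun j => 2 * INR (j - i) * psib j (gamma I psib j z)).
Proof.
  intros Hi. unfold gamma. rewrite sum1_sumL.
  remember (I - i)%nat as n eqn:Hn. destruct n as [|m].
  - simpl. rewrite sumL_zero. ring. intros j Hj; apply in_seq1 in Hj.
    replace (j - i)%nat with 0%nat by lia. simpl; ring.
  - change (Gam I psib (S m) (S m) z) with
      (if Nat.leb (S m) m then Gam I psib m (S m) z else z + sumL (seq 0 (S m))
        (fun k' => 2 * INR (S m - k') * psib (I - k')%nat (Gam I psib m k' z))).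
    replace (Nat.leb (S m) m) with false by (symmetry; apply Nat.leb_gt; lia).
    f_equal.
    set (H := fun j => 2 * INR (j - i) * psib j (Gam I psib (I - j) (I - j) z)).
    rewrite (sumL_ext _ _ (fun k' => H (I - k')%nat)).
    + rewrite reindex by lia. unfold H. apply sumL_ext. intros j Hj; apply in_seq1 in Hj.
      destruct (Nat.ltb_spec (I - S m) j); auto.
      replace (j - i)%nat with 0%nat by lia. simpl; ring.
    + intros k' Hk'. apply in_seq in Hk'. unfold H.
      replace (I - (I - k'))%nat with k' by lia.
      replace (I - k' - i)%nat with (S m - k')%nat by lia.
      destruct (Nat.eq_dec k' m) as [->|Hne].
      * reflexivity.
      * rewrite Gam_stable by lia.
        destruct k'; reflexivity.
Qed.

Lemma down_ind I (P : nat -> Prop) :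
  (forall i, (i <= I)%nat -> (forall j, (i < j <= I)%nat -> P j) -> P i) ->
  forall i, (i <= I)%nat -> P i.
Proof.
  intros H. assert (forall n i, (I - i <= n)%nat -> (i <= I)%nat -> P i).
  { induction n; intros i Hn Hi.
    - apply H; auto. intros; lia.
    - apply H; auto. intros j Hj. apply IHn; lia. }
  intros i Hi. apply (H0 (I - i)%nat); auto.
Qed.

Definition GP q I psib i :=
  (forall z, 0 <= z -> z <= gamma I psib i z) /\
  (forall z1 z2, 0 <= z1 -> z1 <= z2 -> z2 - z1 <= gamma I psib i z2 - gamma I psib i z1) /\
  gamma I psib i 0 = 0 /\
  Ck q (extup (gamma I psib i)).

Lemma GP_all q I psib : inCI I psib -> inCqI q I psib -> forall i, (i <= I)%nat -> GP q I psib i.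
Proof.
  intros HC Hq. apply down_ind. intros i Hi IH.
  assert (Tnn : forall j z, (1 <= j <= I)%nat -> 0 <= z -> 0 <= 2 * INR (j - i) * psib j (gamma I psib j z)).
  { intros j z Hj Hz. destruct (Compare_dec.le_lt_dec j i).
    - replace (j - i)%nat with 0%nat by lia. simpl; lra.
    - destruct (IH j) as [G1 _]; [lia|]. destruct (HC j Hj) as [_ [Hn _]].
      pose proof (Hn _ (Rle_trans _ _ _ Hz (G1 z Hz))). pose proof (pos_INR (j - i)). nra. }
  split; [|split; [|split]].
  - intros z Hz. rewrite gamma_closed by auto.
    assert (0 <= sum1 I (fun j => 2 * INR (j - i) * psib j (gamma I psib j z))); [|lra].
    apply sumL_nonneg. intros j Hj; apply in_seq1 in Hj. auto.
  - intros z1 z2 H1 H2. rewrite !gamma_closed by auto.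
    assert (sum1 I (fun j => 2 * INR (j - i) * psib j (gamma I psib j z1)) <=
            sum1 I (fun j => 2 * INR (j - i) * psib j (gamma I psib j z2))); [|lra].
    apply sumL_le. intros j Hj; apply in_seq1 in Hj.
    destruct (Compare_dec.le_lt_dec j i).
    + replace (j - i)%nat with 0%nat by lia. simpl; lra.
    + destruct (IH j) as [G1 [G2 _]]; [lia|]. destruct (HC j Hj) as [_ [_ [_ Hm]]].
      pose proof (G1 z1 H1). pose proof (G2 z1 z2 H1 H2).
      pose proof (Hm (gamma I psib j z1) (gamma I psib j z2) ltac:(lra) ltac:(lra)).
      pose proof (pos_INR (j - i)). nra.
  - rewrite gamma_closed by auto. rewrite sum1_sumL, sumL_zero. ring.
    intros j Hj; apply in_seq1 in Hj. destruct (Compare_dec.le_lt_dec j i).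
    + replace (j - i)%nat with 0%nat by lia. simpl; lra.
    + destruct (IH j) as [_ [_ [G3 _]]]; [lia|]. rewrite G3.
      destruct (HC j Hj) as [_ [_ [H0 _]]]. rewrite H0. ring.
  - apply Ck_ext with (fun z => z + sumL (seq 1 I) (fun j => 2 * INR (j - i) * ext0 (psib j) (extup (gamma I psib j) z))).
    + intro z. destruct (Rle_dec 0 z) as [Hz|Hz].
      * rewrite extup_pos, gamma_closed by auto. f_equal. apply sumL_ext.
        intros j Hj; apply in_seq1 in Hj. destruct (Compare_dec.le_lt_dec j i).
        -- replace (j - i)%nat with 0%nat by lia. simpl; lra.
        -- destruct (IH j) as [G1 _]; [lia|]. pose proof (G1 z Hz).
           rewrite extup_pos, ext0_pos by lra. reflexivity.
      * rewrite extup_neg by lra. rewrite sumL_zero. ring.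
        intros j Hj. rewrite extup_neg, ext0_neg by lra. ring.
    + apply Ck_plus. apply Ck_id.
      apply (Ck_sumL q (seq 1 I) (fun j z => 2 * INR (j - i) * ext0 (psib j) (extup (gamma I psib j) z))).
      intros j Hj; apply in_seq1 in Hj. destruct (Compare_dec.le_lt_dec j i).
      * apply Ck_ext with (fun _ => 0). intro; replace (j - i)%nat with 0%nat by lia. simpl; ring.
        apply Ck_const.
      * apply Ck_scal. destruct (IH j) as [_ [_ [_ G4]]]; [lia|].
        apply (Ck_comp q (ext0 (psib j))); auto. apply Ck_Cq. apply (Hq j Hj).
Qed.

Lemma gext_mono q I psib i x y : inCI I psib -> inCqI q I psib -> (i <= I)%nat -> x <= y ->
  y - x <= extup (gamma I psib i) y - extup (gamma I psib i) x.
Proof.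
  intros HC Hq Hi Hxy. destruct (GP_all q I psib HC Hq i Hi) as [G1 [G2 _]].
  destruct (Rle_dec 0 x).
  - rewrite !extup_pos by lra. apply G2; auto.
  - rewrite (extup_neg _ x) by lra. destruct (Rle_dec 0 y).
    + rewrite extup_pos by lra. pose proof (G1 y r). lra.
    + rewrite extup_neg by lra. lra.
Qed.

Lemma partB_full q I psib i : (1 <= q)%nat -> inDbarq q I psib -> (i <= I)%nat ->
  Ck q (extup (gamma I psib i)) /\ inCupq q (gamma I psib i) /\
  (forall z, 1 <= Derive (extup (gamma I psib i)) z) /\
  (forall z, 0 <= z -> z <= gamma I psib i z) /\
  sincr (gamma I psib i) /\ gamma I psib i 0 = 0.
Proof.
  intros Hq1 [[HC _] Hq] Hi. destruct (GP_all q I psib HC Hq i Hi) as [G1 [G2 [G3 G4]]].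
  assert (Hs : sincr (gamma I psib i)).
  { intros x y Hx Hxy. pose proof (G2 x y Hx (Rlt_le _ _ Hxy)). lra. }
  split; auto. split; [|split; [|split; auto]].
  - split; [|apply Ck_Cq; auto]. split; [|split; auto].
    + apply inC_of_glob with (extup (gamma I psib i)).
      * intros; symmetry; apply extup_pos; auto.
      * apply Ck_cont with q; auto.
      * intros u Hu. pose proof (G1 u Hu). lra.
      * auto.
      * intros u1 u2 H1 H2. pose proof (G2 u1 u2 H1 H2). lra.
    + intro M. exists (Rmax M 0). intros u Hu. pose proof (Rmax_l M 0). pose proof (Rmax_r M 0).
      pose proof (G1 u ltac:(lra)). lra.
  - intro z. replace 1 with (1 * 1) by ring. apply deriv_ge.
    destruct q; [lia|]. apply (Ck_S_ex q); auto.
    intros y Hy. pose proof (gext_mono q I psib i z y HC Hq Hi (Rlt_le _ _ Hy)). lra.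
Qed.

Lemma supratio_bij f g f' g' h : (forall u, 0 <= u -> 0 <= h u) ->
  (forall z, 0 <= z -> exists u, 0 <= u /\ h u = z) ->
  (forall u1 u2, 0 <= u1 -> 0 <= u2 -> h u1 = h u2 -> u1 = u2) ->
  (forall u, 0 <= u -> f u = f' (h u) /\ g u = g' (h u)) ->
  supratio f g = supratio f' g'.
Proof.
  intros H1 H2 H3 H4. unfold supratio. apply Lub_Rbar_eqset. intro r. split.
  - intros [u1 [u2 [Hu1 [Hu2 [Hne ->]]]]]. exists (h u1), (h u2).
    destruct (H4 u1 Hu1) as [-> ->]. destruct (H4 u2 Hu2) as [-> ->].
    repeat split; auto; try (intro E; apply Hne; apply H3; auto).
  - intros [z1 [z2 [Hz1 [Hz2 [Hne ->]]]]].
    destruct (H2 z1 Hz1) as [u1 [Hu1 <-]]. destruct (H2 z2 Hz2) as [u2 [Hu2 <-]].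
    exists u1, u2. destruct (H4 u1 Hu1) as [-> ->]. destruct (H4 u2 Hu2) as [-> ->].
    repeat split; auto; try (intro E; apply Hne; subst; auto).
Qed.

Lemma surj_Rplus f E : (forall x, continuous E x) -> (forall u, 0 <= u -> E u = f u) -> f 0 = 0 ->
  (forall M, exists U, forall u, U <= u -> M <= f u) ->
  forall z, 0 <= z -> exists u, 0 <= u /\ f u = z.
Proof.
  intros Hc HE H0 Hub z Hz. destruct (Hub z) as [U HU].
  destruct (ivt_R E 0 (Rmax U 0) z Hc) as [u [Hu1 Hu2]].
  - apply Rmax_r.
  - rewrite !HE by (auto; lra || apply Rmax_r). rewrite H0. split; auto. apply HU, Rmax_l.
  - exists u. split; [lra|]. rewrite <- HE by lra. auto.
Qed.

Definition ginv (f : R -> R) (z : R) : R := if Rle_dec 0 z then finv f z else z.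

Lemma ginv_spec f : (forall z, 0 <= z -> exists u, 0 <= u /\ f u = z) -> sincr f ->
  (forall u, 0 <= u -> 0 <= f u) ->
  (forall z, extup f (ginv f z) = z) /\ (forall u, ginv f (extup f u) = u) /\
  (forall z, 0 <= z -> 0 <= ginv f z /\ f (ginv f z) = z).
Proof.
  intros Hs Hi Hn. unfold ginv.
  assert (G : forall z, 0 <= z -> 0 <= ginv f z /\ f (ginv f z) = z).
  { intros z Hz. unfold ginv. destruct (Rle_dec 0 z); [|lra]. apply finv_spec; auto. }
  split; [|split]; auto.
  - intros z. destruct (Rle_dec 0 z) as [Hz|Hz].
    + destruct (finv_spec f z (Hs z Hz)). rewrite extup_pos; auto.
    + rewrite extup_neg; lra.
  - intros u. destruct (Rle_dec 0 u) as [Hu|Hu].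
    + rewrite extup_pos by auto. pose proof (Hn u Hu). destruct (Rle_dec 0 (f u)); [|lra].
      apply finv_f; auto.
    + rewrite extup_neg by lra. destruct (Rle_dec 0 u); lra.
Qed.

Lemma ginv_pos f z : 0 <= z -> ginv f z = finv f z.
Proof. intros; unfold ginv; destruct (Rle_dec 0 z); auto; lra. Qed.
Lemma ginv_neg f z : z < 0 -> ginv f z = z.
Proof. intros; unfold ginv; destruct (Rle_dec 0 z); auto; lra. Qed.

Lemma Ups_facts q I psi i : (1 <= q)%nat -> inDq q I psi -> (1 <= i <= I)%nat ->
  let f := phi I psi i in
  (forall u, 0 <= u -> Ups I psi i (f u) = psi i u) /\
  (forall z, 0 <= z -> 0 <= finv f z /\ f (finv f z) = z) /\
  sincr f /\ (forall u, 0 <= u -> 0 <= f u) /\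
  Ck q (fun z => ext0 (psi i) (ginv f z)) /\
  (forall z, ext0 (Ups I psi i) z = ext0 (psi i) (ginv f z)).
Proof.
  intros Hq1 HDq Hi f. pose proof HDq as [HD Hq].
  destruct (partA_full q I psi i Hq1 HDq ltac:(lia)) as [Hck [[[HinC [Hs Hub]] Hcq] Hder]].
  fold f in Hck, HinC, Hs, Hub, Hder.
  destruct HinC as [_ [Hnn [H0 Hmono]]].
  assert (Hsurj : forall z, 0 <= z -> exists u, 0 <= u /\ f u = z).
  { apply (surj_Rplus f (extup f)); auto. apply Ck_cont with q; auto.
    intros; apply extup_pos; auto. }
  destruct (ginv_spec f Hsurj Hs Hnn) as [G1 [G2 G3]].
  assert (Hfi : forall u, 0 <= u -> Ups I psi i (f u) = psi i u).
  { intros u Hu. unfold Ups. fold f. rewrite finv_f; auto. }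
  split; auto. split; [intros; apply finv_spec; auto|]. split; auto. split; auto.
  split.
  - destruct q as [|q']; [lia|].
    apply Ck_comp. apply Ck_Cq, (Hq i Hi).
    apply (Ck_invfun q' (extup f)); auto.
    intros x y Hxy. pose proof (K4 I psi i x y HD Hxy). pose proof (cst_pos I psi HD). fold f in H. nra.
  - intro z. destruct (Rle_dec 0 z) as [Hz|Hz].
    + rewrite ext0_pos by auto. rewrite ginv_pos by auto. destruct (finv_spec f z (Hsurj z Hz)).
      rewrite ext0_pos by auto. reflexivity.
    + rewrite ext0_neg by lra. rewrite ginv_neg by lra. rewrite ext0_neg by lra. reflexivity.
Qed.

Lemma partC1 q I psi : (1 <= q)%nat -> inDq q I psi -> inDbarq q I (Ups I psi).
Proof.
  intros Hq1 HDq. pose proof HDq as [[HC [Hup [Hfin Hsum]]] Hq].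
  assert (Hsr : forall i, (1 <= i <= I)%nat ->
            supratio (psi i) (phi I psi i) = supratio (Ups I psi i) (fun z => z)).
  { intros i Hi. destruct (Ups_facts q I psi i Hq1 HDq Hi) as [U1 [U2 [U3 [U4 _]]]].
    apply supratio_bij with (phi I psi i); auto.
    - intros z Hz. exists (finv (phi I psi i) z). apply U2; auto.
    - intros u1 u2 H1 H2 E. apply (sincr_inj _ _ _ U3 H1 H2 E).
    - intros u Hu. split; auto. symmetry; apply U1; auto. }
  assert (Hcomp : forall i, (1 <= i <= I)%nat -> inCq q (Ups I psi i)).
  { intros i Hi. destruct (Ups_facts q I psi i Hq1 HDq Hi) as [U1 [U2 [U3 [U4 [U5 U6]]]]].
    set (f := phi I psi i) in *.
    destruct (HC i Hi) as [_ [Hn [H0 Hm]]].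
    split.
    - apply inC_of_glob with (fun z => ext0 (psi i) (ginv f z)).
      + intros u Hu. rewrite <- U6. rewrite ext0_pos; auto.
      + apply Ck_cont with q; auto.
      + intros u Hu. unfold Ups. apply Hn. apply U2; auto.
      + unfold Ups. fold f. replace 0 with (f 0) at 1 by (apply phi_0; auto).
        rewrite finv_f; auto; lra.
      + intros u1 u2 H1 H2. unfold Ups. fold f. apply Hm. apply U2; auto.
        destruct (U2 u1 H1), (U2 u2 ltac:(lra)).
        apply (sincr_le f); auto. lra.
    - apply Ck_Cq. apply Ck_ext with (fun z => ext0 (psi i) (ginv f z)); auto. }
  split; [split|].
  1:{ intros i Hi. apply Hcomp; auto. }
  1: split.
  - intros i Hi. rewrite <- Hsr; auto.
  - rewrite sum1_sumL. erewrite sumL_ext; [apply Hsum|].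
    intros i Hi; apply in_seq1 in Hi. simpl. rewrite Hsr; auto.
  - intros i Hi. apply Hcomp; auto.
Qed.

Lemma phi_gamma q I psi : (1 <= q)%nat -> inDq q I psi ->
  forall i, (i <= I)%nat -> forall u, 0 <= u ->
  phi I psi i u = gamma I (Ups I psi) i (phi I psi I u).
Proof.
  intros Hq1 HDq. pose proof HDq as [[HC [Hup _]] _].
  apply (down_ind I (fun i => forall u, 0 <= u -> phi I psi i u = gamma I (Ups I psi) i (phi I psi I u))). intros i Hi IH u Hu.
  rewrite gamma_closed by auto. rewrite phi_diff by auto. f_equal.
  rewrite !sum1_sumL. apply sumL_ext. intros j Hj; apply in_seq1 in Hj.
  destruct (Compare_dec.le_lt_dec j i).
  - replace (j - i)%nat with 0%nat by lia. simpl; ring.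
  - rewrite <- IH by (auto; lia). destruct (Ups_facts q I psi j Hq1 HDq Hj) as [U1 _].
    rewrite U1; auto.
Qed.

Lemma phi_zero I psi u : phi I psi 0 u = u.
Proof.
  unfold phi. rewrite sum1_sumL, sumL_zero. ring. intros j _. simpl. ring.
Qed.

Lemma gamma_feq I p1 p2 : feq I p1 p2 ->
  (forall j z, (j <= I)%nat -> 0 <= z -> 0 <= gamma I p1 j z) ->
  forall i, (i <= I)%nat -> forall z, 0 <= z -> gamma I p1 i z = gamma I p2 i z.
Proof.
  intros Hf Hn. apply (down_ind I (fun i => forall z, 0 <= z -> gamma I p1 i z = gamma I p2 i z)). intros i Hi IH z Hz.
  rewrite !gamma_closed by auto. f_equal. rewrite !sum1_sumL. apply sumL_ext.
  intros j Hj; apply in_seq1 in Hj. destruct (Compare_dec.le_lt_dec j i).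
  - replace (j - i)%nat with 0%nat by lia. simpl; ring.
  - rewrite <- IH by (auto; lia). rewrite Hf; auto. apply Hn; auto; lia.
Qed.

Lemma partC2 q I psi1 psi2 : (1 <= q)%nat -> inDq q I psi1 -> inDq q I psi2 ->
  feq I (Ups I psi1) (Ups I psi2) -> feq I psi1 psi2.
Proof.
  intros Hq1 H1 H2 Hf i Hi u Hu.
  pose proof (partC1 q I psi1 Hq1 H1) as B1.
  assert (Gn : forall j z, (j <= I)%nat -> 0 <= z -> 0 <= gamma I (Ups I psi1) j z).
  { intros j z Hj Hz. destruct (partB_full q I (Ups I psi1) j Hq1 B1 Hj) as [_ [_ [_ [G _]]]].
    pose proof (G z Hz). lra. }
  pose proof (gamma_feq I _ _ Hf Gn) as GF.
  pose proof H1 as [[HC1 [Hup1 _]] _]. pose proof H2 as [[HC2 [Hup2 _]] _].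
  assert (P1 : 0 <= phi I psi1 I u) by (apply phi_nonneg; auto).
  assert (P2 : 0 <= phi I psi2 I u) by (apply phi_nonneg; auto).
  assert (E : phi I psi1 I u = phi I psi2 I u).
  { destruct (partB_full q I (Ups I psi1) 0 Hq1 B1 ltac:(lia)) as [_ [_ [_ [_ [S _]]]]].
    apply (sincr_inj _ _ _ S P1 P2).
    rewrite <- (phi_gamma q I psi1 Hq1 H1 0 ltac:(lia) u Hu).
    rewrite GF by (auto; lia).
    rewrite <- (phi_gamma q I psi2 Hq1 H2 0 ltac:(lia) u Hu).
    rewrite !phi_zero. reflexivity. }
  assert (Ei : phi I psi1 i u = phi I psi2 i u).
  { rewrite (phi_gamma q I psi1 Hq1 H1 i ltac:(lia) u Hu).
    rewrite (phi_gamma q I psi2 Hq1 H2 i ltac:(lia) u Hu).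
    rewrite E. apply GF; auto; lia. }
  destruct (Ups_facts q I psi1 i Hq1 H1 Hi) as [U1 [_ [_ [N1 _]]]].
  destruct (Ups_facts q I psi2 i Hq1 H2 Hi) as [U2 _].
  rewrite <- U1, <- U2 by auto. rewrite Ei. apply Hf; auto.
  rewrite <- Ei. apply N1; auto.
Qed.

Lemma gamma_I I psib z : gamma I psib I z = z.
Proof. unfold gamma. rewrite Nat.sub_diag. reflexivity. Qed.

Lemma partC3 q I psib : (1 <= q)%nat -> inDbarq q I psib ->
  exists psi, inDq q I psi /\ feq I (Ups I psi) psib.
Proof.
  intros Hq1 HB. pose proof HB as [[HC [Hfin Hsum]] Hq].
  destruct (partB_full q I psib 0 Hq1 HB ltac:(lia)) as [Hck0 [[[HinC0 [_ Hub0]] _] [Hder0 [Hge0 [Hs0 H00]]]]].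
  set (g0 := gamma I psib 0) in *.
  destruct HinC0 as [_ [Hnn0 _]].
  assert (surj0 : forall z, 0 <= z -> exists u, 0 <= u /\ g0 u = z).
  { apply (surj_Rplus g0 (extup g0)); auto. apply Ck_cont with q; auto.
    intros; apply extup_pos; auto. }
  destruct (ginv_spec g0 surj0 Hs0 Hnn0) as [K1 [K2 K3]].
  set (K := ginv g0) in *.
  assert (Gm : forall x y, x <= y -> y - x <= extup g0 y - extup g0 x).
  { intros. apply (gext_mono q I psib 0); auto; lia. }
  assert (Kck : Ck q K).
  { assert (Hi1 : forall x y, x < y -> extup g0 x < extup g0 y).
    { intros x y Hxy. pose proof (Gm x y (Rlt_le _ _ Hxy)). lra. }
    assert (Hi2 : forall x, 0 < Derive (extup g0) x).
    { intros x. pose proof (Hder0 x). lra. }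
    destruct q as [|q']; [lia|]. exact (Ck_invfun q' (extup g0) K Hck0 Hi1 Hi2 K1 K2). }
  assert (Kmono : forall x y, x <= y -> K x <= K y).
  { intros x y Hxy. destruct (Rle_dec (K x) (K y)) as [|Hn]; auto.
    pose proof (Gm (K y) (K x) ltac:(lra)). rewrite !K1 in H. lra. }
  assert (Kstrict : forall x y, x < y -> K x < K y).
  { intros x y Hxy. destruct (Rlt_dec (K x) (K y)) as [|Hn]; auto.
    pose proof (Gm (K y) (K x) ltac:(lra)). rewrite !K1 in H. lra. }
  assert (K0 : K 0 = 0).
  { pose proof (K2 0). rewrite extup_pos in H by lra. rewrite H00 in H. exact H. }
  assert (Knn : forall u, 0 <= u -> 0 <= K u).
  { intros u Hu. pose proof (Kmono 0 u Hu). lra. }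
  assert (Kg : forall u, 0 <= u -> g0 (K u) = u).
  { intros u Hu. apply K3; auto. }
  set (psi := fun i u => ext0 (psib i) (extup (gamma I psib i) (K u))).
  assert (Bi : forall i, (i <= I)%nat ->
     Ck q (extup (gamma I psib i)) /\ (forall z, 0 <= z -> z <= gamma I psib i z) /\
     sincr (gamma I psib i) /\ gamma I psib i 0 = 0 /\ inCup (gamma I psib i)).
  { intros i Hi. destruct (partB_full q I psib i Hq1 HB Hi) as [A1 [[A2 _] [_ [A4 [A5 A6]]]]].
    repeat split; auto; apply A2. }
  assert (P1 : forall i, (1 <= i <= I)%nat -> Ck q (psi i)).
  { intros i Hi. unfold psi. apply Ck_comp. apply Ck_Cq, (Hq i Hi).
    apply Ck_comp; auto. apply Bi; lia. }
  assert (P2 : forall i u, (i <= I)%nat -> 0 <= u -> psi i u = psib i (gamma I psib i (K u))).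
  { intros i u Hi Hu. unfold psi. destruct (Bi i Hi) as [_ [B2 _]].
    pose proof (Knn u Hu). pose proof (B2 _ H). rewrite extup_pos, ext0_pos by lra. reflexivity. }
  assert (P3 : forall i u, ext0 (psi i) u = psi i u).
  { intros i u. destruct (Rle_dec 0 u). rewrite ext0_pos; auto.
    rewrite ext0_neg by lra. unfold psi. unfold K, ginv. destruct (Rle_dec 0 u); [lra|].
    rewrite extup_neg, ext0_neg by lra. reflexivity. }
  assert (P4 : forall i, (1 <= i <= I)%nat -> forall x y, x <= y -> psi i x <= psi i y).
  { intros i Hi x y Hxy. unfold psi. apply inC_ext0_mono. apply HC; auto.
    pose proof (gext_mono q I psib i (K x) (K y) HC Hq ltac:(lia) (Kmono x y Hxy)). pose proof (Kmono x y Hxy). lra. }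
  assert (P5 : forall i u, (1 <= i <= I)%nat -> 0 <= psi i u).
  { intros i u Hi. unfold psi, ext0. destruct (Rle_dec 0 _); [|lra]. apply HC; auto. }
  assert (P6 : forall i, (1 <= i <= I)%nat -> psi i 0 = 0).
  { intros i Hi. rewrite P2 by (lra || lia). rewrite K0. destruct (Bi i ltac:(lia)) as [_ [_ [_ [B4 _]]]].
    rewrite B4. apply HC; auto. }
  assert (Prel : forall i u, (i <= I)%nat -> 0 <= u -> phi I psi i u = gamma I psib i (K u)).
  { intros i u Hi Hu. unfold phi. rewrite <- (Kg u Hu) at 1. unfold g0.
    rewrite (gamma_closed I psib 0) by lia. rewrite (gamma_closed I psib i) by lia.
    rewrite !sum1_sumL.
    assert (sumL (seq 1 I) (fun j => 2 * INR (j - 0) * psib j (gamma I psib j (K u))) -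
            sumL (seq 1 I) (fun j => 2 * INR (Nat.min i j) * psi j u) =
            sumL (seq 1 I) (fun j => 2 * INR (j - i) * psib j (gamma I psib j (K u)))); [|lra].
    rewrite <- sumL_minus. apply sumL_ext. intros j Hj; apply in_seq1 in Hj.
    rewrite P2 by (lia || lra). rewrite <- (coef_eq I i j) by lia.
    rewrite Nat.sub_0_r. rewrite (Nat.min_r I j) by lia. ring. }
  assert (Phs : forall i, (i <= I)%nat -> sincr (phi I psi i)).
  { intros i Hi x y Hx Hxy. rewrite !Prel by (auto; lra). destruct (Bi i Hi) as [_ [_ [B3 _]]].
    apply B3; auto. }
  assert (Phsurj : forall i, (i <= I)%nat -> forall z, 0 <= z -> exists u, 0 <= u /\ phi I psi i u = z).
  { intros i Hi z Hz. destruct (Bi i Hi) as [B1 [B2 [B3 [B4 [_ [_ B5]]]]]].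
    destruct (surj_Rplus (gamma I psib i) (extup (gamma I psib i))) with z as [v [Hv1 Hv2]]; auto.
    apply Ck_cont with q; auto. intros; apply extup_pos; auto.
    exists (g0 v). assert (0 <= g0 v) by (pose proof (Hge0 v Hv1); lra).
    split; auto. rewrite Prel by auto.
    replace (K (g0 v)) with v; auto. rewrite <- (K2 v) at 1. rewrite extup_pos; auto. }
  assert (Phn : forall i u, (i <= I)%nat -> 0 <= u -> 0 <= phi I psi i u).
  { intros i u Hi Hu. rewrite Prel by auto. destruct (Bi i Hi) as [_ [B2 _]].
    pose proof (B2 _ (Knn u Hu)). pose proof (Knn u Hu). lra. }
  assert (Psr : forall i, (1 <= i <= I)%nat -> supratio (psi i) (phi I psi i) = supratio (psib i) (fun z => z)).
  { intros i Hi. apply supratio_bij with (phi I psi i).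
    - intros; apply Phn; auto; lia.
    - apply Phsurj; lia.
    - intros u1 u2 H1 H2 E. apply (sincr_inj _ _ _ (Phs i ltac:(lia)) H1 H2 E).
    - intros u Hu. split; auto. rewrite Prel, P2 by (lia || lra). reflexivity. }
  exists psi. split; [split; [split; [|split]|]|].
  - intros i Hi. apply inC_of_glob with (psi i); auto.
    + apply Ck_cont with q; auto.
  - split; [|split].
    + apply inC_of_glob with K.
      * intros u Hu. rewrite Prel, gamma_I by auto. reflexivity.
      * apply Ck_cont with q; auto.
      * intros; apply Phn; auto.
      * rewrite Prel, gamma_I by (auto; lra). auto.
      * intros u1 u2 H1 H2. rewrite !Prel, !gamma_I by (auto; lra). auto.
    + apply Phs; auto.
    + intro M. exists (extup g0 (Rmax M 0)). intros u Hu.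
      pose proof (Rmax_l M 0). pose proof (Rmax_r M 0).
      pose proof (Gm 0 (Rmax M 0) H0). rewrite (extup_pos g0 0) in H1 by lra.
      rewrite H00 in H1.
      rewrite Prel, gamma_I by (auto; lra). pose proof (Kmono _ _ Hu). rewrite K2 in H2. lra.
  - split.
    + intros i Hi. rewrite Psr; auto.
    + rewrite sum1_sumL. erewrite sumL_ext; [apply Hsum|].
      intros i Hi; apply in_seq1 in Hi. simpl. rewrite Psr; auto.
  - intros i Hi. split.
    + apply inC_of_glob with (psi i); auto; try (apply Ck_cont with q; auto);
      try (intros u1 u2 _ H; apply P4; auto).
    + apply Ck_Cq. apply Ck_ext with (psi i); auto.
  - intros i Hi z Hz. unfold Ups.
    destruct (finv_spec (phi I psi i) z (Phsurj i ltac:(lia) z Hz)) as [F1 F2].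
    rewrite P2 by (lia || auto). rewrite <- Prel by (lia || auto). rewrite F2. reflexivity.
Qed.
Theorem lemma6p2 (I q : nat) (hq : (1 <= q)%nat) :
  (* (a) *)
  (forall psi, inDq q I psi ->
     forall i, (1 <= i <= I)%nat ->
       inCupq q (phi I psi i) /\
       (forall u, 0 <= u -> 0 < Derive (extup (phi I psi i)) u)) /\
  (* (b) *)
  (forall psib, inDbarq q I psib ->
     (forall i, (i <= I)%nat -> inCupq q (gamma I psib i)) /\
     (forall z, 0 <= z -> 0 < Derive (extup (gamma I psib 0)) z)) /\
  (* (c) Upsilon is a bijection D^q -> Dbar^q *)
  ((forall psi, inDq q I psi -> inDbarq q I (Ups I psi)) /\
   (forall psi1 psi2, inDq q I psi1 -> inDq q I psi2 ->
      feq I (Ups I psi1) (Ups I psi2) -> feq I psi1 psi2) /\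
   (forall psib, inDbarq q I psib ->
      exists psi, inDq q I psi /\ feq I (Ups I psi) psib)).
Proof.
  split; [|split; [|split; [|split]]].
  - intros psi HDq i Hi. destruct (partA_full q I psi i hq HDq ltac:(lia)) as [_ [H1 H2]]. split; auto.
  - intros psib HB. split.
    + intros i Hi. destruct (partB_full q I psib i hq HB Hi) as [_ [H1 _]]. exact H1.
    + intros z _. destruct (partB_full q I psib 0 hq HB ltac:(lia)) as [_ [_ [H3 _]]]. specialize (H3 z). lra.
  - intros psi H. apply partC1; auto.
  - intros psi1 psi2 H1 H2 H3. apply (partC2 q I psi1 psi2); auto.
  - intros psib H. apply partC3; auto.
Qed.
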